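(* Let $q$ be a prime power and $m\ge1$. Let $H\subseteq\mathbb{F}_{q^m}$ be an $\mathbb{F}_q$-subspace of dimension $h$ over $\mathbb{F}_q$ with $1\le h\le m-2$. Let $x\in\mathbb{F}_{q^m}\setminus H$ and $y\in\mathbb{F}_{q^m}$. Then there exists $\alpha\in\mathbb{F}_{q^m}\setminus H$ such that $x+\alpha y\notin H\oplus\langle\alpha\rangle$, where $\langle\alpha\rangle$ denotes the $\mathbb{F}_q$-span of $\alpha$. *)

(* Defs.v *)
From HB Require Import structures.
From mathcomp Require Export all_boot all_order all_algebra all_field.

(* Main.v *)
Require Import Defs.
From HB Require Import structures.
From mathcomp Require Import all_boot all_order all_algebra all_field.
From mathcomp Require Import zify.

Set Implicit Arguments.
Unset Strict Implicit.
Unset Printing Implicit Defensive.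
Import GRing.Theory.
Local Open Scope ring_scope.

Theorem lemma3p7 (F : finFieldType) (L : fieldExtType F) (m h : nat)
  (hm : \dim (fullv : {vspace L}) = m) (H : {vspace L})
  (hH : \dim H = h) (h1 : (1 <= h)%N) (h2 : (h <= m - 2)%N)
  (x y : L) (hx : x \notin H) :
  exists2 a : L, a \notin H & x + a * y \notin (H + <[a]>)%VS.
Proof.
pose T := finvect_type L.
pose Hs : {set T} := [set a : T | a \in H].
have cH : #|Hs| = (#|F| ^ h)%N.
  rewrite -hH -(card_vspace (H : {vspace T})); apply: eq_card => a.
  by rewrite inE.
have cT : #|T| = (#|F| ^ m)%N.
  rewrite -hm -(card_vspace (fullv : {vspace T})); apply: eq_card => a.
  by rewrite memvf.
pose f := fun p : F * T => ((p.2 - x) / (y - p.1%:A) : T).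
pose B : {set T} := Hs :|: f @: (setX [set: F] Hs).
have cB : (#|B| < #|T|)%N.
  apply: (leq_ltn_trans (leq_card_setU _ _)).
  apply: (@leq_ltn_trans (#|Hs| + #|setX [set: F] Hs|)%N).
    by rewrite leq_add2l leq_imset_card.
  rewrite cardsX cardsT cH cT.
  have q2 : (2 <= #|F|)%N.
    rewrite (cardD1 0) (cardD1 1) !inE oner_neq0 //.
  have hm2 : (h + 2 <= m)%N by lia.
  apply: (@leq_trans (#|F| ^ (h + 2))%N); last by rewrite leq_pexp2l //; lia.
  set q := #|F|.
  have qp : (0 < q ^ h)%N by rewrite expn_gt0 (leq_trans _ q2).
  rewrite expnD (_ : (q ^ h + q * q ^ h = q ^ h * (1 + q))%N); last by rewrite mulnDr muln1 mulnC.
  rewrite ltn_mul2l qp /=; nia.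
have [a aB] : exists a : T, a \notin B.
  apply/existsP; rewrite -negb_forall; apply/negP => /forallP allB.
  have : B = [set: T] by apply/setP => a; rewrite in_setT allB.
  by move=> eB; move: cB; rewrite eB cardsT ltnn.
move: aB; rewrite inE negb_or inE => /andP [aH aI].
exists a => //; apply/negP => /memv_addP [s sH [v /vlineP [c ->] ev]].
have es : s = x + a * (y - c%:A) by rewrite mulrBr addrA ev (mulrC a) mulr_algl addrK.
have [y0 | y0] := eqVneq (y - c%:A) 0.
  by move: es; rewrite y0 mulr0 addr0 => ex; move: hx; rewrite -ex sH.
move/imsetP: aI; apply; exists (c, (s : T)).
  by rewrite !inE /=.
by rewrite /f /= es addrC addKr mulfK.
Qed.
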